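(* Let $n>2$ and $0<\epsilon<\frac{1}{n(n+1)}$. For $1\le i\le n-1$, let player $i$ have the uniform probability measure on the interval $(\frac in-\epsilon,\frac in+\epsilon)$ as valuation, and let player $n$ have the uniform (Lebesgue) valuation on $[0,1]$. Then: (a) in every envy-free complete connected division, all cut points lie in $\{\frac in: 1\le i\le n-1\}$ (each piece is of the form $(\frac{j-1}{n},\frac jn)$), player $n$ has utility exactly $\frac1n$, and each player $i\le n-1$ has utility exactly $\frac12$; (b) the partial division giving player $n$ the interval $(0,\frac1n)$, player 1 the interval $(\frac1n,\frac2n-2\epsilon)$, and each player $2\le i\le n-1$ the interval $\big(i(\frac1n-\epsilon),(i+1)(\frac1n-\epsilon)\big)$, and discarding the rest, is envy-free, gives player $n$ utility $\frac1n$, player 1 utility $\frac12$, and each player $2\le i\le n-1$ utility $1$.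
   Context: A (connected) division for players $1,\dots,n$ of the cake $[0,1]$ is a sequence $(X_1,\dots,X_n)$ of pairwise disjoint open intervals (possibly empty), $X_i$ being player $i$'s piece; it is complete if the union of the closures of the $X_i$ equals $[0,1]$, and partial otherwise. Each player $i$ has a valuation $v_i$, a nonatomic probability measure on $[0,1]$; $u_i(x,j)=v_i(X_j)$. A division is envy-free if $u_i(x,i)\ge u_i(x,j)$ for all $i,j$. *)

(* Defs.v *)
From Stdlib Require Import Reals Lra Lia Arith.
Open Scope R_scope.

(* A piece is an open interval (a,b) with 0 <= a <= b <= 1 (empty iff a = b).
   Pieces of players 1..n are given by endpoint functions a b : nat -> R. *)

Definition overlap (a b c d : R) : R := Rmax 0 (Rmin b d - Rmax a c).

Definition val (n : nat) (eps : R) (i : nat) (a b : R) : R :=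
  if Nat.eqb i n then overlap a b 0 1
  else overlap a b (INR i / INR n - eps) (INR i / INR n + eps) / (2 * eps).

Definition piece (a b : nat -> R) (j : nat) : R -> Prop :=
  fun x => a j < x < b j.

Definition in_closure (X : R -> Prop) (x : R) : Prop :=
  forall delta, 0 < delta -> exists y, X y /\ Rabs (y - x) < delta.

Definition is_division (n : nat) (a b : nat -> R) : Prop :=
  (forall j, (1 <= j <= n)%nat -> 0 <= a j <= b j /\ b j <= 1) /\
  (forall j k, (1 <= j <= n)%nat -> (1 <= k <= n)%nat -> j <> k ->
     forall x, ~ (piece a b j x /\ piece a b k x)).

Definition complete (n : nat) (a b : nat -> R) : Prop :=
  forall x, (0 <= x <= 1) <->
    (exists j, (1 <= j <= n)%nat /\ in_closure (piece a b j) x).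

Definition util (n : nat) (eps : R) (a b : nat -> R) (i j : nat) : R :=
  val n eps i (a j) (b j).

Definition envy_free (n : nat) (eps : R) (a b : nat -> R) : Prop :=
  forall i j, (1 <= i <= n)%nat -> (1 <= j <= n)%nat ->
    util n eps a b i j <= util n eps a b i i.

Definition a_part (n : nat) (eps : R) (j : nat) : R :=
  if Nat.eqb j n then 0
  else if Nat.eqb j 1 then 1 / INR n
  else INR j * (1 / INR n - eps).

Definition b_part (n : nat) (eps : R) (j : nat) : R :=
  if Nat.eqb j n then 1 / INR n
  else if Nat.eqb j 1 then 2 / INR n - 2 * eps
  else (INR j + 1) * (1 / INR n - eps).

(* Main.v *)
Require Import Defs.
From Stdlib Require Import Reals Lra Lia Arith List Classical ClassicalEpsilon.
Open Scope R_scope.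

Ltac rdes := repeat match goal with
  | |- context [Rle_dec ?x ?y] => destruct (Rle_dec x y)
  | H : context [Rle_dec ?x ?y] |- _ => destruct (Rle_dec x y) end.
Ltac ovt := unfold overlap, Rmax, Rmin in *; rdes; lra.

Lemma closure_bounds a b j x : in_closure (piece a b j) x -> a j < b j /\ a j <= x <= b j.
Proof.
  intros H. destruct (H 1 Rlt_0_1) as [y [[Hy1 Hy2] _]]. split; [lra|]. split.
  - destruct (Rle_dec (a j) x); auto. exfalso.
    destruct (H (a j - x)) as [z [[Hz1 Hz2] Hz]]; [lra|]. apply Rabs_def2 in Hz. lra.
  - destruct (Rle_dec x (b j)); auto. exfalso.
    destruct (H (x - b j)) as [z [[Hz1 Hz2] Hz]]; [lra|]. apply Rabs_def2 in Hz. lra.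
Qed.

Lemma disj_order n a b j k : is_division n a b -> (1 <= j <= n)%nat -> (1 <= k <= n)%nat ->
  j <> k -> a j < b j -> a k < b k -> b j <= a k \/ b k <= a j.
Proof.
  intros [_ H] Hj Hk Hjk H1 H2.
  destruct (Rle_dec (b j) (a k)); auto. destruct (Rle_dec (b k) (a j)); auto. exfalso.
  apply (H j k Hj Hk Hjk ((Rmax (a j) (a k) + Rmin (b j) (b k))/2)).
  unfold piece; unfold Rmax, Rmin; rdes; lra.
Qed.

Lemma val_n n eps x y : val n eps n x y = overlap x y 0 1.
Proof. unfold val. rewrite Nat.eqb_refl. reflexivity. Qed.

Lemma val_i n eps i x y : i <> n ->
  val n eps i x y = overlap x y (INR i / INR n - eps) (INR i / INR n + eps) / (2 * eps).
Proof. intros H. unfold val. rewrite (proj2 (Nat.eqb_neq i n) H). reflexivity. Qed.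

Lemma div_le_pos x y e : 0 < e -> x / (2*e) <= y / (2*e) -> x <= y.
Proof. intros He H. unfold Rdiv in H. apply Rmult_le_reg_r in H; auto.
  apply Rinv_0_lt_compat; lra. Qed.

Lemma div_pos_inv x e : 0 < e -> 0 < x / (2*e) -> 0 < x.
Proof. intros He H. unfold Rdiv in H.
  destruct (Rle_dec x 0); auto. 2: lra.
  assert (0 < / (2*e)) by (apply Rinv_0_lt_compat; lra). nra. Qed.

Lemma mono_div N i j : 0 < N -> (j <= i)%nat -> INR j / N <= INR i / N.
Proof. intros HN H. apply le_INR in H. unfold Rdiv. apply Rmult_le_compat_r; auto.
  left; apply Rinv_0_lt_compat; lra. Qed.

Lemma step_div N i j : 0 < N -> (j + 1 <= i)%nat -> INR j / N + 1 / N <= INR i / N.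
Proof. intros HN H. apply le_INR in H. rewrite plus_INR in H. simpl in H.
  unfold Rdiv. rewrite <- Rmult_plus_distr_r. apply Rmult_le_compat_r; [|lra].
  left; apply Rinv_0_lt_compat; lra. Qed.

Lemma eps_facts n eps : (2 < n)%nat -> 0 < eps -> eps < 1 / (INR n * (INR n + 1)) ->
  0 < INR n /\ 3 <= INR n /\ (INR n + 1) * eps < 1 / INR n /\ 2 * eps < 1 / INR n.
Proof.
  intros Hn He H. assert (3 <= INR n) by (replace 3 with (INR 3) by (simpl; lra); apply le_INR; lia).
  assert (Hp: 0 < INR n * (INR n + 1)) by nra.
  assert (H1: eps * (INR n * (INR n + 1)) < 1).
  { apply Rmult_lt_compat_r with (r := INR n * (INR n + 1)) in H; auto.
    unfold Rdiv in H. rewrite Rmult_1_l, Rinv_l in H; lra. }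
  assert (H2: (INR n + 1) * eps < 1 / INR n).
  { apply Rmult_lt_reg_r with (INR n); [lra|]. unfold Rdiv. rewrite Rmult_1_l, Rinv_l; lra. }
  repeat split; try lra. nra.
Qed.

Lemma ap_n n eps : a_part n eps n = 0. Proof. unfold a_part; rewrite Nat.eqb_refl; auto. Qed.
Lemma bp_n n eps : b_part n eps n = / INR n.
Proof. unfold b_part; rewrite Nat.eqb_refl; unfold Rdiv; ring. Qed.
Lemma ap_1 n eps : n <> 1%nat -> a_part n eps 1 = / INR n.
Proof. intros H. unfold a_part. rewrite (proj2 (Nat.eqb_neq 1 n)) by lia. simpl. unfold Rdiv; ring. Qed.
Lemma bp_1 n eps : n <> 1%nat -> b_part n eps 1 = 2 * (/ INR n - eps).
Proof. intros H. unfold b_part. rewrite (proj2 (Nat.eqb_neq 1 n)) by lia. simpl. unfold Rdiv; ring. Qed.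
Lemma ap_o n eps j : j <> n -> j <> 1%nat -> a_part n eps j = INR j * (/ INR n - eps).
Proof. intros H H1. unfold a_part. rewrite (proj2 (Nat.eqb_neq j n)) by lia.
  rewrite (proj2 (Nat.eqb_neq j 1)) by lia. unfold Rdiv; ring. Qed.
Lemma bp_o n eps j : j <> n -> j <> 1%nat -> b_part n eps j = (INR j + 1) * (/ INR n - eps).
Proof. intros H H1. unfold b_part. rewrite (proj2 (Nat.eqb_neq j n)) by lia.
  rewrite (proj2 (Nat.eqb_neq j 1)) by lia. unfold Rdiv; ring. Qed.

Lemma ufacts n eps : (2 < n)%nat -> 0 < eps -> eps < 1 / (INR n * (INR n + 1)) ->
  0 < INR n /\ 3 <= INR n /\ INR n * / INR n = 1 /\ 0 < / INR n /\
  (INR n + 1) * eps < / INR n /\ 2 * eps < / INR n.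
Proof. intros Hn He H. destruct (eps_facts n eps Hn He H) as (A&B&C&D).
  unfold Rdiv in C, D. rewrite Rmult_1_l in C, D.
  repeat split; auto. apply Rinv_r; lra. apply Rinv_0_lt_compat; lra. Qed.

Lemma INR_range j n : (2 <= j <= n - 1)%nat -> (2 < n)%nat ->
  2 <= INR j /\ INR j + 1 <= INR n.
Proof. intros H Hn. split.
  - replace 2 with (INR 2) by (simpl; lra). apply le_INR; lia.
  - rewrite <- S_INR. apply le_INR; lia. Qed.

Lemma part_bounds n eps j : (2 < n)%nat -> 0 < eps -> eps < 1 / (INR n * (INR n + 1)) ->
  (1 <= j <= n)%nat ->
  0 <= a_part n eps j <= b_part n eps j /\ b_part n eps j <= 1.
Proof.
  intros Hn He H Hj. destruct (ufacts n eps Hn He H) as (N0&N3&Nu&u0&Ne&Ne2).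
  set (u := / INR n) in *.
  destruct (Nat.eq_dec j n) as [->|Hjn].
  { rewrite ap_n, bp_n. fold u. nra. }
  destruct (Nat.eq_dec j 1) as [->|Hj1].
  { rewrite ap_1, bp_1 by lia. fold u. nra. }
  rewrite ap_o, bp_o by lia. fold u.
  destruct (INR_range j n) as [J1 J2]; [lia|lia|]. nra.
Qed.

Lemma part_ord n eps j k : (2 < n)%nat -> 0 < eps -> eps < 1 / (INR n * (INR n + 1)) ->
  (1 <= j <= n)%nat -> (1 <= k <= n)%nat ->
  (j = n /\ k <> n) \/ (k <> n /\ (j < k)%nat) -> b_part n eps j <= a_part n eps k.
Proof.
  intros Hn He H Hj Hk Hjk. destruct (ufacts n eps Hn He H) as (N0&N3&Nu&u0&Ne&Ne2).
  set (u := / INR n) in *.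
  destruct Hjk as [[-> Hk']|[Hk' Hjk]].
  - rewrite bp_n. fold u. destruct (Nat.eq_dec k 1) as [->|Hk1].
    + rewrite ap_1 by lia. fold u. lra.
    + rewrite ap_o by lia. fold u. destruct (INR_range k n) as [J1 J2]; [lia|lia|]. nra.
  - assert (j <> n) by lia. rewrite ap_o by lia. fold u.
    destruct (INR_range k n) as [J1 J2]; [lia|lia|].
    destruct (Nat.eq_dec j 1) as [->|Hj1].
    + rewrite bp_1 by lia. fold u. nra.
    + rewrite bp_o by lia. fold u. assert (INR j + 1 <= INR k) by (rewrite <- S_INR; apply le_INR; lia).
      nra.
Qed.

Lemma part_div n eps : (2 < n)%nat -> 0 < eps -> eps < 1 / (INR n * (INR n + 1)) ->
  is_division n (a_part n eps) (b_part n eps).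
Proof.
  intros Hn He H. split.
  - intros j Hj. apply part_bounds; auto.
  - intros j k Hj Hk Hjk x [[A B] [C D]].
    assert (b_part n eps j <= a_part n eps k \/ b_part n eps k <= a_part n eps j) as [E|E]; [|lra|lra].
    destruct (Nat.eq_dec j n); [left; apply part_ord; auto; lia|].
    destruct (Nat.eq_dec k n); [right; apply part_ord; auto; lia|].
    destruct (Nat.lt_ge_cases j k); [left|right]; apply part_ord; auto; lia.
Qed.

Lemma part_notcomplete n eps : (2 < n)%nat -> 0 < eps -> eps < 1 / (INR n * (INR n + 1)) ->
  ~ complete n (a_part n eps) (b_part n eps).
Proof.
  intros Hn He H Hc. destruct (ufacts n eps Hn He H) as (N0&N3&Nu&u0&Ne&Ne2).
  destruct (proj1 (Hc 1) ltac:(lra)) as [j [Hj Hcl]].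
  apply closure_bounds in Hcl. set (u := / INR n) in *.
  assert (b_part n eps j < 1); [|lra].
  destruct (Nat.eq_dec j n) as [->|Hjn].
  { rewrite bp_n. fold u. nra. }
  destruct (Nat.eq_dec j 1) as [->|Hj1].
  { rewrite bp_1 by lia. fold u. nra. }
  rewrite bp_o by lia. fold u.
  destruct (INR_range j n) as [J1 J2]; [lia|lia|]. nra.
Qed.

Lemma part_util_n n eps j : (2 < n)%nat -> 0 < eps -> eps < 1 / (INR n * (INR n + 1)) ->
  (1 <= j <= n)%nat -> util n eps (a_part n eps) (b_part n eps) n j =
  b_part n eps j - a_part n eps j.
Proof. intros Hn He H Hj. unfold util. rewrite val_n.
  pose proof (part_bounds n eps j Hn He H Hj). ovt. Qed.

Lemma Idiv n i : INR i / INR n = INR i * / INR n. Proof. reflexivity. Qed.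

Lemma part_util_1 n eps : (2 < n)%nat -> 0 < eps -> eps < 1 / (INR n * (INR n + 1)) ->
  util n eps (a_part n eps) (b_part n eps) 1 1 = 1 / 2.
Proof. intros Hn He H. destruct (ufacts n eps Hn He H) as (N0&N3&Nu&u0&Ne&Ne2).
  unfold util. rewrite val_i by lia. rewrite ap_1, bp_1 by lia. rewrite Idiv. simpl INR.
  set (u := / INR n) in *. replace (overlap u (2 * (u - eps)) (1 * u - eps) (1 * u + eps)) with eps.
  field. lra. unfold overlap, Rmax, Rmin; rdes; nra. Qed.

Lemma part_util_i n eps i : (2 < n)%nat -> 0 < eps -> eps < 1 / (INR n * (INR n + 1)) ->
  (2 <= i <= n - 1)%nat -> util n eps (a_part n eps) (b_part n eps) i i = 1.
Proof. intros Hn He H Hi. destruct (ufacts n eps Hn He H) as (N0&N3&Nu&u0&Ne&Ne2).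
  destruct (INR_range i n) as [J1 J2]; [lia|lia|].
  unfold util. rewrite val_i by lia. rewrite ap_o, bp_o by lia. rewrite Idiv.
  set (u := / INR n) in *.
  replace (overlap (INR i * (u - eps)) ((INR i + 1) * (u - eps)) (INR i * u - eps) (INR i * u + eps)) with (2*eps).
  field. lra. unfold overlap, Rmax, Rmin; rdes; nra. Qed.

Lemma val_le1 n eps i x y : 0 < eps -> i <> n -> val n eps i x y <= 1.
Proof. intros He Hi. rewrite val_i by auto.
  apply Rmult_le_reg_r with (2*eps); [lra|]. unfold Rdiv. rewrite Rmult_assoc, Rinv_l by lra. ovt. Qed.

Lemma part_ef n eps : (2 < n)%nat -> 0 < eps -> eps < 1 / (INR n * (INR n + 1)) ->
  envy_free n eps (a_part n eps) (b_part n eps).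
Proof.
  intros Hn He H i j Hi Hj. destruct (ufacts n eps Hn He H) as (N0&N3&Nu&u0&Ne&Ne2).
  destruct (Nat.eq_dec i n) as [->|Hin].
  { rewrite !part_util_n by auto. rewrite ap_n, bp_n.
    destruct (Nat.eq_dec j n) as [->|Hjn]. { rewrite ap_n, bp_n. lra. }
    destruct (Nat.eq_dec j 1) as [->|Hj1]. { rewrite ap_1, bp_1 by lia. lra. }
    rewrite ap_o, bp_o by lia. lra. }
  destruct (Nat.eq_dec i 1) as [->|Hi1].
  2: { rewrite part_util_i by (auto; lia). unfold util. apply val_le1; auto. }
  rewrite part_util_1 by auto. unfold util. rewrite val_i by lia. rewrite Idiv. simpl INR.
  set (u := / INR n) in *.
  apply Rmult_le_reg_r with (2*eps); [lra|]. unfold Rdiv. rewrite Rmult_assoc, Rinv_l by lra.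
  destruct (Nat.eq_dec j n) as [->|Hjn].
  { rewrite ap_n, bp_n. fold u. unfold overlap, Rmax, Rmin; rdes; nra. }
  destruct (Nat.eq_dec j 1) as [->|Hj1]. { rewrite ap_1, bp_1 by lia. fold u. unfold overlap, Rmax, Rmin; rdes; nra. }
  rewrite ap_o, bp_o by lia. fold u.
  destruct (INR_range j n) as [J1 J2]; [lia|lia|].
  unfold overlap, Rmax, Rmin; rdes; nra.
Qed.

Lemma fin_gap (n : nat) (a : nat -> R) x : exists d, 0 < d /\
  forall j, (1 <= j <= n)%nat -> x < a j -> x + d <= a j.
Proof.
  induction n as [|n [d [Hd IH]]].
  - exists 1. split; [lra|]. intros; lia.
  - destruct (Rlt_dec x (a (S n))).
    + exists (Rmin d (a (S n) - x)). split. { unfold Rmin; destruct Rle_dec; lra. }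
      intros j Hj Hx. destruct (Nat.eq_dec j (S n)) as [->|Hne].
      * unfold Rmin; destruct Rle_dec; lra.
      * pose proof (IH j ltac:(lia) Hx). unfold Rmin; destruct Rle_dec; lra.
    + exists d. split; auto. intros j Hj Hx. destruct (Nat.eq_dec j (S n)) as [->|Hne].
      * lra.
      * apply IH; auto; lia.
Qed.

Definition RN n (a b : nat -> R) := forall x, 0 <= x < 1 -> exists j, (1 <= j <= n)%nat /\ a j <= x < b j.

Lemma right_nb n a b : complete n a b -> RN n a b.
Proof.
  intros Hc x Hx. apply NNPP. intros Hno.
  destruct (fin_gap n a x) as [d [Hd Hg]].
  set (y := x + Rmin d (1 - x) / 2).
  assert (Hm: 0 < Rmin d (1 - x) <= d /\ Rmin d (1 - x) <= 1 - x) by (unfold Rmin; destruct Rle_dec; lra).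
  destruct (proj1 (Hc y) ltac:(unfold y; lra)) as [j [Hj Hcl]].
  apply closure_bounds in Hcl.
  apply Hno. exists j. split; auto.
  destruct (Rle_dec (a j) x).
  - split; auto. unfold y in Hcl. destruct (Rlt_dec x (b j)); auto. exfalso.
    apply Hno. exists j. split; auto. split; auto. lra.
  - exfalso. pose proof (Hg j Hj ltac:(lra)). unfold y in Hcl. lra.
Qed.

Definition nxt n (a b : nat -> R) x : nat :=
  epsilon (inhabits 0%nat) (fun j => (1 <= j <= n)%nat /\ a j <= x < b j).
Fixpoint cc n (a b : nat -> R) k : R :=
  match k with O => 0 | S k' => b (nxt n a b (cc n a b k')) end.
Definition sg n a b k := nxt n a b (cc n a b (pred k)).

Lemma nxt_spec n a b x : RN n a b -> 0 <= x < 1 ->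
  (1 <= nxt n a b x <= n)%nat /\ a (nxt n a b x) <= x < b (nxt n a b x).
Proof. intros H Hx. unfold nxt. apply epsilon_spec. apply H; auto. Qed.

Lemma chain_basic n a b t : is_division n a b -> RN n a b ->
  (forall k, (k < t)%nat -> cc n a b k < 1) ->
  forall k, (k <= t)%nat -> 0 <= cc n a b k <= 1.
Proof.
  intros Hd Hr Ht k. induction k as [|k IH]; intros Hk.
  - simpl; lra.
  - simpl. assert (0 <= cc n a b k < 1) by (split; [apply IH; lia| apply Ht; lia]).
    destruct (nxt_spec n a b _ Hr H) as [Hj _].
    destruct (proj1 Hd _ Hj). lra.
Qed.

Lemma chain_step n a b t : is_division n a b -> RN n a b ->
  (forall k, (k < t)%nat -> cc n a b k < 1) ->
  forall k, (1 <= k <= t)%nat ->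
  (1 <= sg n a b k <= n)%nat /\ a (sg n a b k) <= cc n a b (k - 1) < b (sg n a b k) /\
  b (sg n a b k) = cc n a b k.
Proof.
  intros Hd Hr Ht k Hk. destruct k as [|k]; [lia|].
  assert (0 <= cc n a b k < 1).
  { split; [apply (chain_basic n a b t); auto; lia| apply Ht; lia]. }
  unfold sg. simpl pred. replace (S k - 1)%nat with k by lia.
  destruct (nxt_spec n a b _ Hr H) as [Hj Hab]. auto.
Qed.

Lemma chain_mono n a b t : is_division n a b -> RN n a b ->
  (forall k, (k < t)%nat -> cc n a b k < 1) ->
  forall k k', (k < k' <= t)%nat -> cc n a b k < cc n a b k'.
Proof.
  intros Hd Hr Ht k k' Hk. induction k' as [|k' IH]; [lia|].
  destruct (chain_step n a b t Hd Hr Ht (S k') ltac:(lia)) as (_&H1&H2).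
  replace (S k' - 1)%nat with k' in H1 by lia.
  destruct (Nat.eq_dec k k') as [->|Hne]; [lra|].
  pose proof (IH ltac:(lia)). lra.
Qed.

Lemma chain_inj n a b t : is_division n a b -> RN n a b ->
  (forall k, (k < t)%nat -> cc n a b k < 1) ->
  forall k k', (1 <= k <= t)%nat -> (1 <= k' <= t)%nat -> sg n a b k = sg n a b k' -> k = k'.
Proof.
  intros Hd Hr Ht k k' Hk Hk' He.
  destruct (chain_step n a b t Hd Hr Ht k Hk) as (_&_&H1).
  destruct (chain_step n a b t Hd Hr Ht k' Hk') as (_&_&H2).
  rewrite He in H1. destruct (Nat.lt_total k k') as [L|[E|L]]; auto.
  - pose proof (chain_mono n a b t Hd Hr Ht k k' ltac:(lia)). lra.
  - pose proof (chain_mono n a b t Hd Hr Ht k' k ltac:(lia)). lra.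
Qed.

Lemma chain_a n a b t : is_division n a b -> RN n a b ->
  (forall k, (k < t)%nat -> cc n a b k < 1) ->
  forall k, (1 <= k <= t)%nat -> a (sg n a b k) = cc n a b (k - 1).
Proof.
  intros Hd Hr Ht k Hk.
  destruct (chain_step n a b t Hd Hr Ht k Hk) as (Hs&H1&H2).
  destruct (Nat.eq_dec k 1) as [->|Hk1].
  { simpl in *. destruct (proj1 Hd _ Hs). lra. }
  destruct (chain_step n a b t Hd Hr Ht (k - 1) ltac:(lia)) as (Hs'&H1'&H2').
  assert (sg n a b (k - 1) <> sg n a b k).
  { intros E. apply (chain_inj n a b t Hd Hr Ht) in E; lia. }
  destruct (disj_order n a b _ _ Hd Hs' Hs H ltac:(lra) ltac:(lra)) as [E|E].
  - lra.
  - pose proof (chain_mono n a b t Hd Hr Ht (k - 1) k ltac:(lia)). lra.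
Qed.

Lemma pigeon (f : nat -> nat) t n : (forall k, (1 <= k <= t)%nat -> (1 <= f k <= n)%nat) ->
  (forall k k', (1 <= k <= t)%nat -> (1 <= k' <= t)%nat -> f k = f k' -> k = k') -> (t <= n)%nat.
Proof.
  intros H1 H2.
  assert (HL: (length (map f (seq 1 t)) <= length (seq 1 n))%nat).
  { apply NoDup_incl_length.
    - apply NoDup_map_NoDup_ForallPairs; [|apply seq_NoDup].
      intros x y Hx Hy. apply in_seq in Hx, Hy. apply H2; lia.
    - intros y Hy. apply in_map_iff in Hy. destruct Hy as [x [<- Hx]].
      apply in_seq in Hx. apply in_seq. pose proof (H1 x ltac:(lia)). lia. }
  rewrite length_map, !length_seq in HL. auto.
Qed.

Lemma pigeon2 (f : nat -> nat) t n :
  (forall j, (1 <= j <= n)%nat -> exists k, (1 <= k <= t)%nat /\ f k = j) -> (n <= t)%nat.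
Proof.
  intros H.
  assert (HL: (length (seq 1 n) <= length (map f (seq 1 t)))%nat).
  { apply NoDup_incl_length. apply seq_NoDup.
    intros y Hy. apply in_seq in Hy. destruct (H y ltac:(lia)) as [k [Hk E]].
    apply in_map_iff. exists k. split; auto. apply in_seq. lia. }
  rewrite length_map, !length_seq in HL. auto.
Qed.

Lemma least_ex (P : nat -> Prop) k : P k -> exists m, P m /\ forall j, (j < m)%nat -> ~ P j.
Proof.
  induction k as [k IH] using lt_wf_ind. intros Hk.
  destruct (classic (exists j, (j < k)%nat /\ P j)) as [[j [Hj Pj]]|Hno].
  - apply (IH j Hj Pj).
  - exists k. split; auto. intros j Hj Pj. apply Hno; eauto.
Qed.

Lemma cover n a b t : is_division n a b -> RN n a b ->
  (forall k, (k < t)%nat -> cc n a b k < 1) ->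
  forall t' z, (t' <= t)%nat -> 0 <= z < cc n a b t' ->
  exists k, (1 <= k <= t')%nat /\ cc n a b (k - 1) <= z < cc n a b k.
Proof.
  intros Hd Hr Ht t'. induction t' as [|t' IH]; intros z Ht' Hz.
  - simpl in Hz. lra.
  - destruct (Rlt_dec z (cc n a b t')).
    + destruct (IH z ltac:(lia) ltac:(lra)) as [k [Hk Hz']]. exists k. split; auto; lia.
    + exists (S t'). split; [lia|]. replace (S t' - 1)%nat with t' by lia. lra.
Qed.

Lemma chain_exists n a b : is_division n a b -> complete n a b ->
  (forall j, (1 <= j <= n)%nat -> a j < b j) ->
  exists (c : nat -> R) (s : nat -> nat), c O = 0 /\ c n = 1 /\
   (forall k, (1 <= k <= n)%nat -> (1 <= s k <= n)%nat /\ a (s k) = c (k - 1)%nat /\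
       b (s k) = c k /\ c (k - 1)%nat < c k) /\
   (forall k k', (1 <= k <= n)%nat -> (1 <= k' <= n)%nat -> s k = s k' -> k = k') /\
   (forall j, (1 <= j <= n)%nat -> exists k, (1 <= k <= n)%nat /\ s k = j).
Proof.
  intros Hd Hc Hne. pose proof (right_nb n a b Hc) as Hr.
  assert (Hex: exists k, ~ cc n a b k < 1).
  { apply NNPP. intros Hno.
    assert (Hall: forall k, (k < S n)%nat -> cc n a b k < 1).
    { intros k _. apply NNPP. intros H. apply Hno. eauto. }
    assert (S n <= n)%nat; [|lia].
    apply (pigeon (sg n a b)).
    - intros k Hk. apply (chain_step n a b (S n) Hd Hr Hall k Hk).
    - apply (chain_inj n a b (S n) Hd Hr Hall). }
  destruct Hex as [k0 Hk0]. destruct (least_ex (fun k => ~ cc n a b k < 1) k0 Hk0) as [m [Hm Hmin]].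
  assert (Ht: forall k, (k < m)%nat -> cc n a b k < 1).
  { intros k Hk. apply NNPP. apply Hmin; auto. }
  assert (Hm1: cc n a b m = 1).
  { pose proof (chain_basic n a b m Hd Hr Ht m (le_n _)). lra. }
  assert (Hsurj: forall j, (1 <= j <= n)%nat -> exists k, (1 <= k <= m)%nat /\ sg n a b k = j).
  { intros j Hj. pose proof (Hne j Hj) as Hab. destruct (proj1 Hd j Hj) as [Hb1 Hb2].
    destruct (cover n a b m Hd Hr Ht m ((a j + b j) / 2) (le_n _) ltac:(lra)) as [k [Hk Hz]].
    exists k. split; auto.
    destruct (chain_step n a b m Hd Hr Ht k Hk) as (Hs&H1&H2).
    pose proof (chain_a n a b m Hd Hr Ht k Hk) as Ha.
    destruct (Nat.eq_dec (sg n a b k) j) as [E|Hne']; auto. exfalso.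
    destruct (disj_order n a b _ _ Hd Hs Hj Hne' ltac:(lra) Hab) as [E|E]; lra. }
  assert (m <= n)%nat.
  { apply (pigeon (sg n a b)).
    - intros k Hk. apply (chain_step n a b m Hd Hr Ht k Hk).
    - apply (chain_inj n a b m Hd Hr Ht). }
  assert (n <= m)%nat by (apply (pigeon2 (sg n a b)); auto).
  assert (m = n) by lia. subst m.
  exists (cc n a b), (sg n a b). split; [reflexivity|]. split; auto. split; [|split].
  - intros k Hk. destruct (chain_step n a b n Hd Hr Ht k Hk) as (Hs&H1&H2).
    pose proof (chain_a n a b n Hd Hr Ht k Hk) as Ha. repeat split; try lia; lra.
  - apply (chain_inj n a b n Hd Hr Ht).
  - auto.
Qed.

Lemma envy_ov n eps a b i j : envy_free n eps a b -> (1 <= i <= n)%nat -> (1 <= j <= n)%nat ->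
  i <> n -> 0 < eps ->
  overlap (a j) (b j) (INR i * / INR n - eps) (INR i * / INR n + eps) <=
  overlap (a i) (b i) (INR i * / INR n - eps) (INR i * / INR n + eps).
Proof.
  intros Hef Hi Hj Hin He. pose proof (Hef i j Hi Hj) as H. unfold util in H.
  rewrite !val_i in H by auto. apply div_le_pos in H; auto.
Qed.

Lemma envy_n n eps a b j : is_division n a b -> envy_free n eps a b -> (1 <= j <= n)%nat ->
  b j - a j <= b n - a n.
Proof.
  intros Hd Hef Hj. assert (Hn: (1 <= n <= n)%nat) by lia.
  pose proof (Hef n j Hn Hj) as H. unfold util in H. rewrite !val_n in H.
  destruct (proj1 Hd j Hj). destruct (proj1 Hd n Hn). ovt.
Qed.

Lemma INR_pred_u k u : (1 <= k)%nat -> INR (k - 1) * u = INR k * u - u.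
Proof. intros H. rewrite minus_INR by lia. simpl. ring. Qed.

Lemma mono_u u i j : 0 < u -> (j <= i)%nat -> INR j * u <= INR i * u.
Proof. intros Hu H. apply le_INR in H. nra. Qed.

Lemma step_u u i j : 0 < u -> (j + 1 <= i)%nat -> INR j * u + u <= INR i * u.
Proof. intros Hu H. apply le_INR in H. rewrite plus_INR in H. simpl in H. nra. Qed.

Lemma core n eps a b (c : nat -> R) (s : nat -> nat) :
  (2 < n)%nat -> 0 < eps -> 2 * eps < / INR n -> INR n * / INR n = 1 ->
  is_division n a b -> envy_free n eps a b ->
  (forall i, (1 <= i <= n - 1)%nat -> a i < INR i * / INR n + eps /\ INR i * / INR n - eps < b i) ->
  c O = 0 -> c n = 1 ->
  (forall k, (1 <= k <= n)%nat -> (1 <= s k <= n)%nat /\ a (s k) = c (k - 1)%nat /\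
       b (s k) = c k /\ c (k - 1)%nat < c k) ->
  (forall k k', (1 <= k <= n)%nat -> (1 <= k' <= n)%nat -> s k = s k' -> k = k') ->
  (forall j, (1 <= j <= n)%nat -> exists k, (1 <= k <= n)%nat /\ s k = j) ->
  forall k, (k <= n)%nat -> c k = INR k * / INR n.
Proof.
  intros Hn He Hu2 Hnu Hd Hef HF Hc0 Hcn Hs Hinj Hsurj.
  assert (Hu: 0 < / INR n) by lra.
  set (u := / INR n) in *.
  destruct (Hsurj n ltac:(lia)) as [p [Hp Hsp]].
  set (L := c p - c (p - 1)%nat).
  assert (Hlen: forall k, (1 <= k <= n)%nat -> c k - c (k - 1)%nat <= L).
  { intros k Hk. destruct (Hs k Hk) as (A&B&C&D). destruct (Hs p Hp) as (A'&B'&C'&D').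
    rewrite Hsp in B', C'. pose proof (envy_n n eps a b (s k) Hd Hef A). unfold L. lra. }
  assert (Hup: forall k, (k <= n)%nat -> c k <= INR k * L).
  { induction k as [|k IH]; intros Hk. { rewrite Hc0. simpl. lra. }
    pose proof (Hlen (S k) ltac:(lia)). replace (S k - 1)%nat with k in H by lia.
    rewrite S_INR. pose proof (IH ltac:(lia)). lra. }
  assert (Hdown: forall d, (d <= n)%nat -> 1 - INR d * L <= c (n - d)%nat).
  { induction d as [|d IH]; intros Hdn. { rewrite Nat.sub_0_r, Hcn. simpl. lra. }
    pose proof (Hlen (n - d)%nat ltac:(lia)). replace (n - d - 1)%nat with (n - S d)%nat in H by lia.
    rewrite S_INR. pose proof (IH ltac:(lia)). lra. }
  assert (HLu: u <= L).
  { pose proof (Hup n (le_n _)). rewrite Hcn in H. nra. }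
  assert (Hov: forall k, (1 <= k <= n)%nat -> k <> p ->
     (1 <= s k <= n - 1)%nat /\ c (k - 1)%nat < INR (s k) * u + eps /\ INR (s k) * u - eps < c k).
  { intros k Hk Hkp. destruct (Hs k Hk) as (A&B&C&D).
    assert (s k <> n). { intros E. rewrite <- Hsp in E. apply Hinj in E; auto. }
    destruct (HF (s k) ltac:(lia)). rewrite <- B, <- C. repeat split; auto; lia. }
  assert (Hinc: forall k, (1 <= k)%nat -> (k + 1 <= n)%nat -> k <> p -> (k + 1)%nat <> p ->
     (s k < s (k + 1))%nat).
  { intros k Hk1 Hk2 Hkp Hkp'.
    destruct (Hov k ltac:(lia) Hkp) as (A&B&C).
    destruct (Hov (k + 1)%nat ltac:(lia) Hkp') as (A'&B'&C').
    replace (k + 1 - 1)%nat with k in B' by lia.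
    assert (s k <> s (k + 1)%nat). { intros E. apply Hinj in E; lia. }
    destruct (Nat.lt_ge_cases (s k) (s (k + 1)%nat)) as [L1|L1]; auto. exfalso.
    pose proof (step_u u (s k) (s (k + 1)%nat) Hu ltac:(lia)). lra. }
  assert (Hleft: (2 <= p)%nat -> forall k, (1 <= k <= p - 1)%nat -> (k <= s k)%nat).
  { intros Hp2. induction k as [|k IH]; intros Hk; [lia|].
    destruct (Nat.eq_dec k 0) as [->|Hk0].
    - destruct (Hov 1%nat ltac:(lia) ltac:(lia)). lia.
    - pose proof (IH ltac:(lia)). pose proof (Hinc k ltac:(lia) ltac:(lia) ltac:(lia) ltac:(lia)).
      replace (k + 1)%nat with (S k) in H0 by lia. lia. }
  assert (Hright: (p <= n - 1)%nat -> forall d k, (k = n - d)%nat -> (p + 1 <= k <= n)%nat ->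
     (s k <= k - 1)%nat).
  { intros Hpn. induction d as [|d IH]; intros k Hkd Hk.
    - subst k. rewrite Nat.sub_0_r. destruct (Hov n ltac:(lia) ltac:(lia)). lia.
    - pose proof (IH (k + 1)%nat ltac:(lia) ltac:(lia)).
      pose proof (Hinc k ltac:(lia) ltac:(lia) ltac:(lia) ltac:(lia)). lia. }
  assert (Hcl: INR (p - 1) * u <= c (p - 1)%nat).
  { destruct (Nat.eq_dec p 1) as [->|Hp1]. { simpl. rewrite Hc0. lra. }
    set (q := s (p - 1)%nat).
    assert (Hq: (p - 1 <= q)%nat) by (apply Hleft; lia).
    destruct (Hov (p - 1)%nat ltac:(lia) ltac:(lia)) as (A&B&C). fold q in A, B, C.
    destruct (Hs (p - 1)%nat ltac:(lia)) as (A1&B1&C1&D1). fold q in B1, C1.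
    destruct (Hs p Hp) as (A2&B2&C2&D2). rewrite Hsp in B2, C2.
    pose proof (envy_ov n eps a b q n Hef ltac:(lia) ltac:(lia) ltac:(lia) He) as E.
    rewrite B1, C1, B2, C2 in E. fold u in E.
    replace (p - 1 - 1)%nat with (p - 2)%nat in * by lia.
    pose proof (mono_u u q (p - 1) Hu Hq).
    assert (INR q * u <= c (p - 1)%nat); [|lra].
    fold L in HLu.
    clear - E HLu C D1 Hu2 He. unfold L in HLu. ovt. }
  assert (Hcr: c p <= INR p * u).
  { destruct (Nat.eq_dec p n) as [->|Hpn]. { rewrite Hcn. fold u in Hnu. lra. }
    set (q := s (p + 1)%nat).
    assert (Hq: (q <= p)%nat).
    { pose proof (Hright ltac:(lia) (n - (p + 1))%nat (p + 1)%nat ltac:(lia) ltac:(lia)). unfold q. lia. }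
    destruct (Hov (p + 1)%nat ltac:(lia) ltac:(lia)) as (A&B&C). fold q in A, B, C.
    replace (p + 1 - 1)%nat with p in B by lia.
    destruct (Hs (p + 1)%nat ltac:(lia)) as (A1&B1&C1&D1). fold q in B1, C1.
    replace (p + 1 - 1)%nat with p in B1, D1 by lia.
    destruct (Hs p Hp) as (A2&B2&C2&D2). rewrite Hsp in B2, C2.
    pose proof (envy_ov n eps a b q n Hef ltac:(lia) ltac:(lia) ltac:(lia) He) as E.
    rewrite B1, C1, B2, C2 in E. fold u in E.
    pose proof (mono_u u p q Hu Hq).
    assert (c p <= INR q * u); [|lra].
    clear - E HLu B D1 Hu2 He. unfold L in HLu. ovt. }
  assert (HL: L = u).
  { rewrite INR_pred_u in Hcl by lia. unfold L in *. lra. }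
  rewrite HL in Hup, Hdown.
  intros k Hk. pose proof (Hup k Hk). pose proof (Hdown (n - k)%nat ltac:(lia)).
  replace (n - (n - k))%nat with k in H0 by lia. rewrite minus_INR in H0 by lia.
  fold u in Hnu. nra.
Qed.

Lemma Ffacts n eps a b : (2 < n)%nat -> 0 < eps -> 2 * eps < / INR n -> INR n * / INR n = 1 ->
  0 < / INR n ->
  is_division n a b -> complete n a b -> envy_free n eps a b ->
  (forall j, (1 <= j <= n)%nat -> a j < b j) /\
  (forall i, (1 <= i <= n - 1)%nat -> a i < INR i * / INR n + eps /\ INR i * / INR n - eps < b i).
Proof.
  intros Hn He Hu2 Hnu Hu Hd Hc Hef.
  assert (Hi: forall i, (1 <= i <= n - 1)%nat ->
    a i < b i /\ a i < INR i * / INR n + eps /\ INR i * / INR n - eps < b i).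
  { intros i Hi. set (x := INR i * / INR n).
    assert (Hx: 0 <= x <= 1).
    { unfold x. rewrite <- Hnu. split.
      - apply Rmult_le_pos; [apply pos_INR|lra].
      - apply mono_u; auto; lia. }
    destruct (proj1 (Hc x) Hx) as [j [Hj Hcl]]. apply closure_bounds in Hcl.
    pose proof (envy_ov n eps a b i j Hef ltac:(lia) Hj ltac:(lia) He) as E. fold x in E.
    assert (0 < overlap (a j) (b j) (x - eps) (x + eps)) by ovt.
    clear - E H He. ovt. }
  split.
  - intros j Hj. destruct (Nat.eq_dec j n) as [->|Hjn].
    + destruct (proj1 (Hc (1/2)) ltac:(lra)) as [j [Hj' Hcl]]. apply closure_bounds in Hcl.
      pose proof (envy_n n eps a b j Hd Hef Hj'). lra.
    + apply Hi; lia.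
  - intros i Hi'. apply Hi; auto.
Qed.

Theorem mainTheorem13 (n : nat) (eps : R) :
  (2 < n)%nat -> 0 < eps -> eps < 1 / (INR n * (INR n + 1)) ->
  (* (a) *)
  (forall a b : nat -> R,
     is_division n a b -> complete n a b -> envy_free n eps a b ->
     (forall k, (1 <= k <= n)%nat ->
        exists j, (1 <= j <= n)%nat /\
          a k = INR (j - 1) / INR n /\ b k = INR j / INR n) /\
     util n eps a b n n = 1 / INR n /\
     (forall i, (1 <= i <= n - 1)%nat -> util n eps a b i i = 1 / 2)) /\
  (* (b) *)
  (is_division n (a_part n eps) (b_part n eps) /\
   ~ complete n (a_part n eps) (b_part n eps) /\
   envy_free n eps (a_part n eps) (b_part n eps) /\
   util n eps (a_part n eps) (b_part n eps) n n = 1 / INR n /\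
   util n eps (a_part n eps) (b_part n eps) 1 1 = 1 / 2 /\
   (forall i, (2 <= i <= n - 1)%nat ->
      util n eps (a_part n eps) (b_part n eps) i i = 1)).
Proof.
  intros Hn He Heps. destruct (ufacts n eps Hn He Heps) as (N0&N3&Nu&u0&Ne&Ne2).
  assert (H1u: 1 / INR n = / INR n) by (unfold Rdiv; ring).
  split.
  - intros a b Hd Hc Hef.
    destruct (Ffacts n eps a b Hn He Ne2 Nu u0 Hd Hc Hef) as [Hne HF].
    destruct (chain_exists n a b Hd Hc Hne) as (c&s&Hc0&Hcn&Hs&Hinj&Hsurj).
    pose proof (core n eps a b c s Hn He Ne2 Nu Hd Hef HF Hc0 Hcn Hs Hinj Hsurj) as Hck.
    set (u := / INR n) in *.
    split; [|split].
    + intros k Hk. destruct (Hsurj k Hk) as [j [Hj <-]]. exists j. split; auto.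
      destruct (Hs j Hj) as (A&B&C&D). rewrite B, C, !Hck by lia. split; reflexivity.
    + destruct (Hsurj n ltac:(lia)) as [p [Hp Hsp]].
      destruct (Hs p Hp) as (A&B&C&D). rewrite Hsp in B, C.
      unfold util. rewrite val_n, B, C, !Hck by lia. rewrite INR_pred_u by lia.
      rewrite H1u. fold u.
      assert (0 <= INR p * u - u /\ INR p * u <= 1).
      { rewrite <- INR_pred_u by lia. rewrite <- Nu. split.
        - apply Rmult_le_pos; [apply pos_INR|lra].
        - apply mono_u; auto; lia. }
      ovt.
    + intros i Hi. destruct (Hsurj i ltac:(lia)) as [k [Hk <-]].
      destruct (Hs k Hk) as (A&B&C&D). destruct (HF (s k) Hi) as [F1 F2].
      unfold util. rewrite val_i by lia. rewrite B, C in *. rewrite !Hck in * by lia.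
      rewrite INR_pred_u in * by lia. change (INR (s k) / INR n) with (INR (s k) * u).
      assert (Hov: overlap (INR k * u - u) (INR k * u) (INR (s k) * u - eps) (INR (s k) * u + eps) = eps).
      { assert (Hp1: forall x, INR (x + 1) * u = INR x * u + u) by (intros x; rewrite plus_INR; simpl; ring).
        destruct (Nat.lt_ge_cases k (s k)) as [L1|L1].
        - pose proof (step_u u (s k) k u0 ltac:(lia)). lra.
        - destruct (Nat.eq_dec k (s k)) as [E|E].
          + rewrite <- E. ovt.
          + destruct (Nat.eq_dec k (s k + 1)) as [E2|E2].
            * assert (INR k * u = INR (s k) * u + u) by (rewrite <- Hp1; f_equal; f_equal; lia). rewrite H. ovt.
            * pose proof (step_u u k (s k + 1) u0 ltac:(lia)). rewrite Hp1 in H. lra. }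
      rewrite Hov. field. lra.
  - split; [apply part_div; auto|]. split; [apply part_notcomplete; auto|].
    split; [apply part_ef; auto|]. split.
    + rewrite part_util_n by (auto; lia). rewrite ap_n, bp_n. lra.
    + split; [apply part_util_1; auto|]. intros i Hi. apply part_util_i; auto.
Qed.
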